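(* For every real $0<B<1$ and positive integer $L$, $$\sum_{\ell=1}^L\frac{L+1-\ell}{\sin^2\left(\frac{\pi\ell B}{L}\right)}=\frac{L^3}{6B^2}-\frac{L^2\log L}{\pi^2B^2}+O_B(L^2),$$ where the implied constant depends only on $B$. *)

(* Defs.v *)
From Stdlib Require Import Reals.
Open Scope R_scope.

(* S(B,L) = \sum_{l=1}^{L} (L+1-l) / sin^2(pi l B / L).
   sum_f_R0 f n = f 0 + ... + f n; here k = 0..L-1 and l = k+1 = 1..L. *)
Definition lemma8_sum (B : R) (L : nat) : R :=
  sum_f_R0 (fun k => let l := INR (S k) in
              (INR L + 1 - l) / (sin (PI * l * B / INR L)) ^ 2) (pred L).

(* Main.v *)
Require Import Defs.
From Stdlib Require Import Reals.
Open Scope R_scope.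
From Stdlib Require Import Lra Lia.


Lemma sum_bound (f : nat -> R) (c : R) (n : nat) :
  (forall k, (k <= n)%nat -> Rabs (f k) <= c) ->
  Rabs (sum_f_R0 f n) <= c * INR (S n).
Proof.
  induction n as [|n IH]; intros H.
  - simpl. rewrite Rmult_1_r. apply H. lia.
  - rewrite tech5. rewrite (S_INR (S n)).
    eapply Rle_trans; [apply Rabs_triang|].
    assert (H1 := IH (fun k Hk => H k (Nat.le_trans _ _ _ Hk (Nat.le_succ_diag_r n)))).
    assert (H2 := H (S n) (Nat.le_refl _)). lra.
Qed.

Lemma sum_rev (n : nat) : forall (f : nat -> R),
  sum_f_R0 (fun k => f (n - k)%nat) n = sum_f_R0 f n.
Proof.
  induction n as [|n IH]; intros f.
  - reflexivity.
  - rewrite tech5. rewrite Nat.sub_diag.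
    rewrite (sum_eq (fun k => f (S n - k)%nat) (fun k => (fun j => f (S j)) (n - k)%nat)).
    2:{ intros i Hi. f_equal. lia. }
    rewrite (IH (fun j => f (S j))). rewrite (decomp_sum f (S n)) by lia. simpl pred. ring.
Qed.

Lemma sum_split (f : nat -> R) (N : nat) :
  sum_f_R0 f (2 * N + 1) = sum_f_R0 f N + sum_f_R0 (fun j => f (S N + j)%nat) N.
Proof.
  rewrite (tech2 f N (2 * N + 1)) by lia.
  replace (2 * N + 1 - S N)%nat with N by lia. reflexivity.
Qed.

Lemma inv_sq_le a b : 0 < a -> a <= b -> / b ^ 2 <= / a ^ 2.
Proof.
  intros Ha Hab. apply Rinv_le_contravar. apply pow_lt; lra.
  apply pow_incr; lra.
Qed.

Lemma csc_bounds x : 0 < x <= PI / 2 ->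
  / x ^ 2 <= / sin x ^ 2 <= 1 + / x ^ 2.
Proof.
  intros [H0 H1].
  assert (Hpi := PI_RGT_0). assert (Hpi4 := PI_4).
  assert (Hs : 0 < sin x) by (apply sin_gt_0; lra).
  assert (Hsx : sin x < x) by (apply sin_lt_x; lra).
  split.
  - apply inv_sq_le; lra.
  - assert (Hc : 0 <= cos x) by (apply cos_ge_0; lra).
    destruct (sin_bound x 0) as [Hsl _]; [lra|lra|].
    destruct (cos_bound x 0) as [_ Hcu]; [lra|lra|].
    unfold sin_approx, cos_approx, sin_term, cos_term in Hsl, Hcu; simpl in Hsl, Hcu.
    assert (Hxc : x * cos x <= sin x).
    { assert (x <= 2) by lra.
      assert (x * cos x <= x * (1 - x^2/2 + x^4/24)).
      { apply Rmult_le_compat_l; lra. }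
      assert (x * (1 - x^2/2 + x^4/24) <= x - x^3/6).
      { assert (0 <= x^2) by nra. assert (x^2 <= 4) by nra.
        assert (0 <= x^3) by (apply pow_le; lra).
        assert (E : x - x^3/6 - x * (1 - x^2/2 + x^4/24) = x^3 * (8 - x^2)/24) by field.
        nra. }
      lra. }
    assert (Hsc := sin2_cos2 x). unfold Rsqr in Hsc.
    assert (x^2 * cos x ^2 <= sin x ^2).
    { assert (0 <= x * cos x) by nra. 
      replace (x^2 * cos x^2) with ((x*cos x)^2) by ring. apply pow_incr; lra. }
    assert (Hs2 : 0 < sin x ^ 2) by (apply pow_lt; lra).
    assert (Hx2 : 0 < x ^ 2) by (apply pow_lt; lra).
    assert (Hsc' : sin x ^ 2 = 1 - cos x ^ 2) by (rewrite <- Hsc; ring).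
    apply Rmult_le_reg_r with (sin x^2 * x^2). nra.
    assert (E1 : / sin x ^ 2 * (sin x ^ 2 * x ^ 2) = x^2) by (field; lra).
    assert (E2 : (1 + / x^2) * (sin x ^ 2 * x ^ 2) = sin x ^2 * x^2 + sin x ^2) by (field; lra).
    rewrite E1, E2.
    replace (sin x ^2 * x^2) with (x^2 - x^2*cos x^2) by (rewrite Hsc'; ring).
    lra.
Qed.

Ltac inr := repeat rewrite ?S_INR, ?plus_INR, ?mult_INR; simpl INR.

Lemma sum_scal (f : nat -> R) c n : sum_f_R0 (fun k => c * f k) n = c * sum_f_R0 f n.
Proof. induction n; simpl; [ring| rewrite IHn; ring]. Qed.

Lemma sum_aff (f : nat -> R) a c n :
  sum_f_R0 (fun k => a + c * f k) n = a * INR (S n) + c * sum_f_R0 f n.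
Proof.
  induction n as [|n IH]. simpl; ring.
  rewrite tech5, IH. rewrite (S_INR (S n)). simpl sum_f_R0. ring.
Qed.

Definition th (p l : nat) : R := (2 * INR l + 1) * PI / (4 * INR (S p)).
Definition Hs p := sum_f_R0 (fun l => / sin (th p l) ^ 2) p.
Definition Gs p := sum_f_R0 (fun l => / sin ((2 * INR l + 1) * PI / (2 * INR (S p))) ^ 2) p.

Lemma th_pos p l : 0 < th p l.
Proof.
  unfold th. assert (Hpi := PI_RGT_0). assert (0 <= INR l) by apply pos_INR.
  assert (0 <= INR p) by apply pos_INR. rewrite S_INR.
  apply Rdiv_lt_0_compat; [apply Rmult_lt_0_compat|]; lra.
Qed.

Lemma th_compl p l : (l <= p)%nat -> th p (p - l) = PI / 2 - th p l.
Proof.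
  intros Hl. unfold th. rewrite minus_INR by exact Hl. rewrite S_INR.
  assert (0 <= INR p) by apply pos_INR. field. lra.
Qed.

Lemma th_range p l : (l <= p)%nat -> 0 < th p l < PI / 2.
Proof.
  intros Hl. split. apply th_pos.
  assert (H := th_pos p (p - l)). rewrite th_compl in H by exact Hl. lra.
Qed.

Lemma Gs_split p : Gs (2 * p + 1) =
  sum_f_R0 (fun l => / sin (th p l) ^ 2 + / cos (th p l) ^ 2) p.
Proof.
  unfold Gs. rewrite sum_split, <- plus_sum. apply sum_eq. intros l Hl.
  assert (0 <= INR p) by apply pos_INR.
  f_equal.
  - f_equal. f_equal. f_equal. unfold th. inr. field. lra.
  - replace ((2 * INR (S p + l) + 1) * PI / (2 * INR (S (2 * p + 1)))) with (th p l + PI / 2).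
    + rewrite sin_plus, sin_PI2, cos_PI2. f_equal. f_equal. ring.
    + unfold th. inr. field. lra.
Qed.

Lemma sc_id x : sin x <> 0 -> cos x <> 0 ->
  / sin x ^ 2 + / cos x ^ 2 = 4 * / sin (2 * x) ^ 2.
Proof.
  intros Hs Hc. rewrite sin_2a.
  assert (Hsc := sin2_cos2 x). unfold Rsqr in Hsc.
  replace (/ sin x ^ 2 + / cos x ^ 2) with ((sin x * sin x + cos x * cos x) / (sin x ^ 2 * cos x ^ 2)) by (field; auto).
  rewrite Hsc. field. auto.
Qed.

Lemma Gs_double p : Gs (2 * p + 1) = 4 * Gs p.
Proof.
  rewrite Gs_split. unfold Gs. rewrite <- sum_scal. apply sum_eq. intros l Hl.
  destruct (th_range p l Hl) as [H1 H2]. assert (Hpi := PI_RGT_0).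
  rewrite sc_id.
  - replace (2 * th p l) with ((2 * INR l + 1) * PI / (2 * INR (S p))). reflexivity.
    unfold th. assert (0 <= INR p) by apply pos_INR.
    rewrite S_INR. field. lra.
  - apply Rgt_not_eq, sin_gt_0; lra.
  - apply Rgt_not_eq, cos_gt_0; lra.
Qed.

Lemma Gs_Hs p : Gs (2 * p + 1) = 2 * Hs p.
Proof.
  rewrite Gs_split, plus_sum.
  assert (E : sum_f_R0 (fun l => / cos (th p l) ^ 2) p = Hs p).
  { unfold Hs. rewrite <- (sum_rev p (fun l => / sin (th p l) ^ 2)).
    apply sum_eq. intros l Hl. simpl. rewrite th_compl by exact Hl.
    rewrite sin_shift. reflexivity. }
  rewrite E. unfold Hs. ring.
Qed.

Lemma pow2_pos k : (1 <= 2 ^ k)%nat.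
Proof. induction k; simpl; lia. Qed.

Lemma Gs0 : Gs 0 = 1.
Proof.
  unfold Gs. simpl sum_f_R0.
  replace ((2 * 0 + 1) * PI / (2 * 1)) with (PI / 2) by field.
  rewrite sin_PI2. field.
Qed.

Lemma INR_pow2 k : INR (S (2 ^ k - 1)) = 2 ^ k.
Proof.
  assert (H := pow2_pos k). replace (S (2 ^ k - 1)) with (2 ^ k)%nat by lia.
  rewrite pow_INR. simpl. try (f_equal; ring).
Qed.

Lemma Gs_pow k : Gs (2 ^ k - 1) = (2 ^ k) ^ 2.
Proof.
  induction k as [|k IH].
  - simpl. rewrite Gs0. ring.
  - assert (H := pow2_pos k).
    replace (2 ^ S k - 1)%nat with (2 * (2 ^ k - 1) + 1)%nat by (simpl; lia).
    rewrite Gs_double, IH. simpl. ring.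
Qed.

Lemma Hs_pow k : Hs (2 ^ k - 1) = 2 * (2 ^ k) ^ 2.
Proof.
  assert (H := Gs_Hs (2 ^ k - 1)). rewrite Gs_double, Gs_pow in H. lra.
Qed.

Definition Od p := sum_f_R0 (fun l => / (2 * INR l + 1) ^ 2) p.

Lemma Hs_bounds p : let N := INR (S p) in
  (16 * N ^ 2 / PI ^ 2) * Od p <= Hs p <= N + (16 * N ^ 2 / PI ^ 2) * Od p.
Proof.
  intros N. unfold Od, Hs.
  assert (E : forall l, / th p l ^ 2 = 16 * N ^ 2 / PI ^ 2 * / (2 * INR l + 1) ^ 2).
  { intros l. unfold th, N. assert (0 <= INR l) by apply pos_INR.
    assert (0 < INR (S p)) by (apply lt_0_INR; lia). assert (Hpi := PI_RGT_0).
    field. repeat split; lra. }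
  split.
  - rewrite <- sum_scal. apply sum_Rle. intros l Hl. rewrite <- E.
    destruct (th_range p l Hl). apply csc_bounds. lra.
  - rewrite <- (Rmult_1_l N) at 1. unfold N at 1. rewrite <- sum_aff.
    apply sum_Rle. intros l Hl.
    rewrite <- E.
    destruct (th_range p l Hl). apply csc_bounds. lra.
Qed.

Lemma Od_pow k : PI ^ 2 / 8 - PI ^ 2 / (16 * 2 ^ k) <= Od (2 ^ k - 1) <= PI ^ 2 / 8.
Proof.
  assert (HB := Hs_bounds (2 ^ k - 1)). cbv zeta in HB. rewrite INR_pow2, Hs_pow in HB.
  assert (Hpi := PI_RGT_0). assert (Hk : 0 < 2 ^ k) by (apply pow_lt; lra).
  set (N := 2 ^ k) in *. set (O := Od (2 ^ k - 1)) in *.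
  assert (Hc : 0 < 16 * N ^ 2 / PI ^ 2).
  { apply Rdiv_lt_0_compat; [|apply pow_lt]; nra. }
  destruct HB as [HB1 HB2].
  split.
  - apply Rmult_le_reg_l with (16 * N ^ 2 / PI ^ 2). exact Hc.
    replace (16 * N ^ 2 / PI ^ 2 * (PI ^ 2 / 8 - PI ^ 2 / (16 * N))) with (2 * N ^ 2 - N)
      by (field; lra). lra.
  - apply Rmult_le_reg_l with (16 * N ^ 2 / PI ^ 2). exact Hc.
    replace (16 * N ^ 2 / PI ^ 2 * (PI ^ 2 / 8)) with (2 * N ^ 2) by (field; lra). lra.
Qed.

Definition Em n := sum_f_R0 (fun k => / INR (S k) ^ 2) n.

Lemma Em_double n : Em (2 * n + 1) = Od n + Em n / 4.
Proof.
  induction n as [|n IH].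
  - unfold Em, Od. simpl. field.
  - replace (2 * S n + 1)%nat with (S (S (2 * n + 1))) by lia.
    unfold Em in *. unfold Od in *. rewrite !tech5, IH.
    assert (0 <= INR n) by apply pos_INR.
    inr. field. repeat split; lra.
Qed.

Definition Zeta2 := PI ^ 2 / 6.
Definition e n := Zeta2 - Em n.

Lemma e_pow k : Rabs (e (2 ^ k - 1)) <= 4 / 2 ^ k.
Proof.
  assert (Hpi := PI_RGT_0). assert (Hpi4 := PI_4).
  assert (Hpi2 : PI ^ 2 <= 16) by nra.
  induction k as [|k IH].
  - simpl. unfold e, Em, Zeta2. simpl. unfold Rabs. destruct (Rcase_abs _); nra.
  - assert (H := pow2_pos k).
    replace (2 ^ S k - 1)%nat with (2 * (2 ^ k - 1) + 1)%nat by (simpl; lia).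
    unfold e in *. rewrite Em_double.
    destruct (Od_pow k) as [O1 O2].
    assert (Hk : 0 < 2 ^ k) by (apply pow_lt; lra).
    assert (PI ^ 2 / (16 * 2 ^ k) <= 1 / 2 ^ k).
    { unfold Rdiv. rewrite Rinv_mult. 
      replace (PI ^ 2 * (/ 16 * / 2 ^ k)) with ((PI^2/16) * / 2 ^ k) by (field; lra).
      apply Rmult_le_compat_r. left; apply Rinv_0_lt_compat; lra. 
      apply Rmult_le_reg_r with 16; lra. }
    replace (Zeta2 - (Od (2 ^ k - 1) + Em (2 ^ k - 1) / 4)) with
      ((PI ^ 2 / 8 - Od (2 ^ k - 1)) + (Zeta2 - Em (2 ^ k - 1)) / 4) by (unfold Zeta2; field).
    simpl pow at 2.
    replace (4 / (2 * 2 ^ k)) with (1 / 2 ^ k + 1 / 2 ^ k) by (field; lra).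
    eapply Rle_trans; [apply Rabs_triang|].
    rewrite Rabs_right by lra.
    unfold Rdiv at 2. rewrite Rabs_mult. rewrite (Rabs_right (/ 4)) by lra.
    replace (1 / 2 ^ k) with ((4 / 2 ^ k) * / 4) at 2 by (field; lra).
    apply Rplus_le_compat. lra. apply Rmult_le_compat_r. lra. exact IH.
Qed.

Lemma Em_tail n d : 0 <= Em (n + d) - Em n <= / INR (S n) - / INR (S (n + d)).
Proof.
  induction d as [|d IH].
  - rewrite Nat.add_0_r. lra.
  - rewrite Nat.add_succ_r. unfold Em in *. rewrite tech5.
    assert (0 <= INR (n + d)) by apply pos_INR.
    set (a := INR (S (n + d))) in *.
    assert (Ha : INR (S (S (n + d))) = a + 1) by (unfold a; rewrite (S_INR (S (n+d))); ring).
    rewrite Ha. assert (1 <= a) by (unfold a; rewrite S_INR; lra).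
    assert (0 <= / (a + 1) ^ 2) by (left; apply Rinv_0_lt_compat, pow_lt; lra).
    assert (/ (a + 1) ^ 2 <= / a - / (a + 1)).
    { replace (/ a - / (a + 1)) with (/ (a * (a + 1))) by (field; lra).
      apply Rinv_le_contravar. nra. nra. }
    lra.
Qed.

Lemma pow2_between n : exists k, (S n <= 2 ^ k <= 2 * S n)%nat.
Proof.
  induction n as [|n [k Hk]].
  - exists 0%nat. simpl. lia.
  - destruct (Nat.le_gt_cases (S (S n)) (2 ^ k)).
    + exists k. lia.
    + exists (S k). simpl. lia.
Qed.

Lemma e_bound n : Rabs (e n) <= 5 / INR (S n).
Proof.
  destruct (pow2_between n) as [k Hk].
  assert (Hp := pow2_pos k).
  assert (Hn : INR (S n) <= 2 ^ k).
  { rewrite <- INR_pow2. apply le_INR. lia. }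
  assert (HS : 0 < INR (S n)) by (apply lt_0_INR; lia).
  assert (HT := Em_tail n (2 ^ k - 1 - n)).
  replace (n + (2 ^ k - 1 - n))%nat with (2 ^ k - 1)%nat in HT by lia.
  assert (HE := e_pow k).
  assert (4 / 2 ^ k <= 4 / INR (S n)).
  { unfold Rdiv. apply Rmult_le_compat_l. lra. apply Rinv_le_contravar; lra. }
  assert (0 < / INR (S (2 ^ k - 1))) by (apply Rinv_0_lt_compat, lt_0_INR; lia).
  replace (e n) with (e (2 ^ k - 1) + (Em (2 ^ k - 1) - Em n)) by (unfold e; ring).
  eapply Rle_trans; [apply Rabs_triang|].
  rewrite (Rabs_right (Em _ - Em _)) by lra.
  replace (5 / INR (S n)) with (4 / INR (S n) + / INR (S n)) by (field; lra).
  lra.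
Qed.

Definition Hm n := sum_f_R0 (fun k => / INR (S k)) n.

Lemma ln_le_sub1 y : 0 < y -> ln y <= y - 1.
Proof. intros Hy. assert (H := exp_ineq1_le (ln y)). rewrite exp_ln in H; lra. Qed.

Lemma ln_diff_le a b : 0 < a -> 0 < b -> ln b - ln a <= b / a - 1.
Proof.
  intros Ha Hb. replace b with (a * (b / a)) at 1 by (field; lra).
  rewrite ln_mult. 2: lra. 2: apply Rdiv_lt_0_compat; lra.
  assert (H := ln_le_sub1 (b / a)). assert (0 < b / a) by (apply Rdiv_lt_0_compat; lra).
  specialize (H H0). lra.
Qed.

Lemma Hm_bounds n : ln (INR (S n)) <= Hm n <= 1 + ln (INR (S n)).
Proof.
  assert (Hlow : forall n, ln (INR (S (S n))) <= Hm n).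
  { induction n0 as [|m IH].
    - unfold Hm. simpl. assert (H := ln_le_sub1 (1 + 1)). lra.
    - unfold Hm in *. rewrite tech5.
      assert (Hm0 : 0 <= INR m) by apply pos_INR.
      assert (Hd := ln_diff_le (INR (S (S m))) (INR (S (S (S m))))).
      assert (E1 : INR (S (S m)) = INR m + 2) by (rewrite !S_INR; ring).
      assert (E2 : INR (S (S (S m))) = INR m + 3) by (rewrite !S_INR; ring).
      rewrite E1, E2 in Hd. rewrite E1 in IH |- *.
      assert (H' := Hd ltac:(lra) ltac:(lra)).
      replace ((INR m + 3) / (INR m + 2) - 1) with (/ (INR m + 2)) in H' by (field; lra).
      rewrite E2. lra. }
  split.
  - eapply Rle_trans; [|apply Hlow]. 
    assert (0 <= INR n) by apply pos_INR.
    left. apply ln_increasing; rewrite ?(S_INR (S n)), ?S_INR; lra.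
  - induction n as [|m IH].
    + unfold Hm. simpl. rewrite ln_1. lra.
    + unfold Hm in *. rewrite tech5.
      assert (0 <= INR m) by apply pos_INR.
      assert (Hd := ln_diff_le (INR (S (S m))) (INR (S m))).
      rewrite (S_INR (S m)) in *.
      assert (0 < INR (S m)) by (apply lt_0_INR; lia).
      assert (H' := Hd ltac:(lra) H0).
      replace (INR (S m) / (INR (S m) + 1) - 1) with (- / (INR (S m) + 1)) in H' by (field; lra).
      lra.
Qed.

Definition gg x := / sin x ^ 2 - / x ^ 2.

Lemma gg_bound B x : 0 < B < 1 -> 0 < x <= PI * B ->
  Rabs (gg x) <= 1 + / sin (PI * B) ^ 2.
Proof.
  intros HB Hx. assert (Hpi := PI_RGT_0).
  assert (HsB : 0 < sin (PI * B)) by (apply sin_gt_0; nra).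
  assert (HiB : 0 < / sin (PI * B) ^ 2) by (apply Rinv_0_lt_compat, pow_lt; lra).
  unfold gg. destruct (Rle_lt_dec x (PI / 2)) as [Hle|Hlt].
  - destruct (csc_bounds x ltac:(lra)). rewrite Rabs_right; lra.
  - assert (Hxpi : x < PI) by nra.
    assert (Hs : 0 < sin x) by (apply sin_gt_0; lra).
    assert (H1 : / x ^ 2 <= / sin x ^ 2).
    { apply inv_sq_le. lra. left. apply sin_lt_x. lra. }
    assert (H2 : / sin x ^ 2 <= / sin (PI * B) ^ 2).
    { apply inv_sq_le. lra. apply sin_decr_1; nra. }
    assert (0 < / x ^ 2) by (apply Rinv_0_lt_compat, pow_lt; lra).
    rewrite Rabs_right; lra.
Qed.

Lemma sum_lin (f h r : nat -> R) c b n :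
  sum_f_R0 (fun k => c * (b * f k - h k) + r k) n =
  c * (b * sum_f_R0 f n - sum_f_R0 h n) + sum_f_R0 r n.
Proof. induction n; simpl; [ring| rewrite IHn; ring]. Qed.

Theorem lemma8 :
  forall B : R, 0 < B < 1 ->
  exists C : R, forall L : nat, (1 <= L)%nat ->
    Rabs (lemma8_sum B L
          - (INR L ^ 3 / (6 * B ^ 2)
             - INR L ^ 2 * ln (INR L) / (PI ^ 2 * B ^ 2)))
    <= C * INR L ^ 2.
Proof.
  intros B HB. assert (Hpi := PI_RGT_0). assert (Hpi4 := PI_4).
  set (G := 1 + / sin (PI * B) ^ 2).
  exists (G + 14 / (PI ^ 2 * B ^ 2)).
  intros L HL. destruct L as [|n]; [lia|].
  set (LL := INR (S n)).
  assert (HL0 : 1 <= LL) by (unfold LL; rewrite S_INR; assert (0 <= INR n) by apply pos_INR; lra).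
  set (c := LL ^ 2 / (PI ^ 2 * B ^ 2)).
  assert (Hc : 0 <= c).
  { unfold c. apply Rmult_le_pos. apply pow_le; lra. left. apply Rinv_0_lt_compat.
    apply Rmult_lt_0_compat; apply pow_lt; lra. }
  assert (Hsum : lemma8_sum B (S n) = c * ((LL + 1) * Em n - Hm n) +
     sum_f_R0 (fun k => (LL + 1 - INR (S k)) * gg (PI * INR (S k) * B / LL)) n).
  { unfold lemma8_sum, Em, Hm. change (pred (S n)) with n.
    rewrite <- sum_lin. apply sum_eq. intros k Hk. cbv zeta. fold LL.
    assert (0 < INR (S k)) by (apply lt_0_INR; lia).
    assert (Hs : 0 < sin (PI * INR (S k) * B / LL)).
    { apply sin_gt_0. apply Rdiv_lt_0_compat; [|lra]. apply Rmult_lt_0_compat; [apply Rmult_lt_0_compat|]; lra.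
      assert (INR (S k) <= LL) by (apply le_INR; lia).
      apply Rmult_lt_reg_r with LL; [lra|].
      replace (PI * INR (S k) * B / LL * LL) with (PI * INR (S k) * B) by (field; lra).
      assert (PI * INR (S k) * B < PI * INR (S k) * 1).
      { apply Rmult_lt_compat_l. apply Rmult_lt_0_compat; lra. lra. }
      assert (PI * INR (S k) <= PI * LL) by (apply Rmult_le_compat_l; lra).
      lra. }
    unfold gg, c. field. repeat split; lra. }
  assert (HR : Rabs (sum_f_R0 (fun k => (LL + 1 - INR (S k)) * gg (PI * INR (S k) * B / LL)) n)
               <= LL * G * LL).
  { apply sum_bound. intros k Hk.
    assert (H1 : 1 <= INR (S k)) by (rewrite S_INR; assert (0 <= INR k) by apply pos_INR; lra).
    assert (H2 : INR (S k) <= LL) by (apply le_INR; lia).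
    rewrite Rabs_mult. apply Rmult_le_compat. apply Rabs_pos. apply Rabs_pos.
    rewrite Rabs_right; lra.
    apply gg_bound. exact HB. split.
    apply Rdiv_lt_0_compat; [|lra]. apply Rmult_lt_0_compat; [apply Rmult_lt_0_compat|]; lra.
    apply Rmult_le_reg_r with LL; [lra|].
    replace (PI * INR (S k) * B / LL * LL) with (PI * B * INR (S k)) by (field; lra).
    apply Rmult_le_compat_l; nra. }
  assert (HE := e_bound n). fold LL in HE. unfold e in HE.
  assert (HH := Hm_bounds n). fold LL in HH.
  assert (HZ : 0 <= Zeta2 <= 3) by (unfold Zeta2; nra).
  assert (HD : Rabs ((LL + 1) * Em n - LL * Zeta2 - (Hm n - ln LL)) <= 14).
  { replace ((LL + 1) * Em n - LL * Zeta2 - (Hm n - ln LL)) with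
      (- (LL + 1) * (Zeta2 - Em n) + Zeta2 - (Hm n - ln LL)) by ring.
    assert (Rabs (- (LL + 1) * (Zeta2 - Em n)) <= 10).
    { rewrite Rabs_mult, Rabs_Ropp, (Rabs_right (LL + 1)) by lra.
      apply Rle_trans with ((LL + 1) * (5 / LL)).
      apply Rmult_le_compat_l; lra.
      apply Rmult_le_reg_r with LL; [lra|].
      replace ((LL + 1) * (5 / LL) * LL) with (5 * LL + 5) by (field; lra). lra. }
    eapply Rle_trans. apply Rabs_triang.
    rewrite Rabs_Ropp.
    eapply Rle_trans. apply Rplus_le_compat_r. apply Rabs_triang.
    rewrite (Rabs_right Zeta2) by lra. rewrite (Rabs_right (Hm n - ln LL)) by lra. lra. }
  rewrite Hsum.
  replace (c * ((LL + 1) * Em n - Hm n) +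
     sum_f_R0 (fun k => (LL + 1 - INR (S k)) * gg (PI * INR (S k) * B / LL)) n -
     (LL ^ 3 / (6 * B ^ 2) - LL ^ 2 * ln LL / (PI ^ 2 * B ^ 2)))
   with (sum_f_R0 (fun k => (LL + 1 - INR (S k)) * gg (PI * INR (S k) * B / LL)) n
         + c * ((LL + 1) * Em n - LL * Zeta2 - (Hm n - ln LL))).
  2:{ unfold c, Zeta2. field. split; lra. }
  eapply Rle_trans. apply Rabs_triang.
  rewrite Rabs_mult, (Rabs_right c) by lra.
  assert (c * Rabs ((LL + 1) * Em n - LL * Zeta2 - (Hm n - ln LL)) <= c * 14)
    by (apply Rmult_le_compat_l; lra).
  replace ((G + 14 / (PI ^ 2 * B ^ 2)) * LL ^ 2) with (LL * G * LL + c * 14)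
    by (unfold c; field; split; lra).
  lra.
Qed.
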